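(* Let $f:\mathbb{N}^d\to\mathbb{N}$ satisfy: (i) $f$ is nondecreasing; (ii) there exist quilt-affine $g_1,\ldots,g_m:\mathbb{N}^d\to\mathbb{Z}$ and $\vec{n}\in\mathbb{N}^d$ such that $f(\vec{x})=\min_k g_k(\vec{x})$ for all $\vec{x}\ge\vec{n}$ componentwise; (iii) for every $i\in\{1,\ldots,d\}$ and $j\in\mathbb{N}$, the fixed-input restriction $f_{[\vec{x}(i)\to j]}$ is obliviously-computable. Then $f$ is obliviously-computable.
   Context: A chemical reaction network (CRN) is a pair $(\mathcal{S},\mathcal{R})$ of a finite set of species and a finite set of reactions $(\vec{R},\vec{P})\in\mathbb{N}^{\mathcal{S}}\times\mathbb{N}^{\mathcal{S}}$. A configuration is $\vec{C}\in\mathbb{N}^{\mathcal{S}}$; a reaction is applicable if $\vec{R}\le\vec{C}$ and yields $\vec{C}-\vec{R}+\vec{P}$; reachability is via finite sequences of applicable reactions. To compute $f:\mathbb{N}^d\to\mathbb{N}$ the CRN has input species $X_1,\ldots,X_d$, output species $Y$, leader species $L$; the initial configuration $\vec{I}_{\vec{x}}$ has $\vec{x}(i)$ copies of $X_i$, one $L$, nothing else. $\vec{C}$ is stable if all configurations reachable from it have the same count of $Y$. The CRN stably computes $f$ if for every $\vec{x}$ and every $\vec{C}$ reachable from $\vec{I}_{\vec{x}}$ some stable $\vec{O}$ reachable from $\vec{C}$ has $\vec{O}(Y)=f(\vec{x})$. The CRN is output-oblivious if $Y$ is never a reactant; $f$ is obliviously-computable if stably computed by an output-oblivious CRN. A function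 $g:\mathbb{N}^d\to\mathbb{Z}$ is quilt-affine if it is nondecreasing and there exist $p\in\mathbb{N}_+$, $\vec{\nabla}\in\mathbb{Q}^d_{\ge0}$, $B:\mathbb{Z}^d/p\mathbb{Z}^d\to\mathbb{Q}$ with $g(\vec{x})=\vec{\nabla}\cdot\vec{x}+B(\vec{x}\bmod p)$. The fixed-input restriction is $f_{[\vec{x}(i)\to j]}(\vec{x})=f(\vec{x}(1),\ldots,\vec{x}(i-1),j,\vec{x}(i+1),\ldots,\vec{x}(d))$. *)

(* Defs.v *)
From Stdlib Require List.
From mathcomp Require Import all_boot all_order all_algebra.
Set Implicit Arguments. Unset Strict Implicit. Unset Printing Implicit Defensive.
Import Order.TTheory GRing.Theory Num.Theory.

Definition vec (d : nat) := 'I_d -> nat.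

Record crn (d : nat) : Type := Crn {
  species : finType;
  reactions : seq ((species -> nat) * (species -> nat));
  inX : 'I_d -> species;
  outY : species;
  leaderL : species;
  inX_inj : injective inX;
  outY_notin : forall i, outY <> inX i;
  leaderL_notin : forall i, leaderL <> inX i;
  leader_neq_out : leaderL <> outY
}.

Definition config (d : nat) (C : crn d) := species C -> nat.

Definition step (d : nat) (C : crn d) (c c' : config C) : Prop :=
  exists2 r, List.In r (reactions C) &
    (forall s, r.1 s <= c s) /\ (forall s, c' s = c s - r.1 s + r.2 s).

Inductive reachable (d : nat) (C : crn d) : config C -> config C -> Prop :=
| reach_refl c : reachable c c
| reach_step c c' c'' : step c c' -> reachable c' c'' -> reachable c c''.

Definition init_config (d : nat) (C : crn d) (x : vec d) : config C :=
  fun s => if s == leaderL C then 1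
           else if [pick i | s == inX C i] is Some i then x i else 0.

Definition stable (d : nat) (C : crn d) (c : config C) : Prop :=
  forall c', reachable c c' -> c' (outY C) = c (outY C).

Definition stably_computes (d : nat) (C : crn d) (f : vec d -> nat) : Prop :=
  forall (x : vec d) (c : config C), reachable (@init_config d C x) c ->
    exists O : config C, [/\ reachable c O, stable O & O (outY C) = f x].

Definition output_oblivious (d : nat) (C : crn d) : Prop :=
  forall r, List.In r (reactions C) -> r.1 (outY C) = 0.

Definition obliviously_computable (d : nat) (f : vec d -> nat) : Prop :=
  exists C : crn d, output_oblivious C /\ stably_computes C f.

Definition vle (d : nat) (x y : vec d) : Prop := forall i, x i <= y i.

Definition nondecreasing_nat (d : nat) (f : vec d -> nat) : Prop :=
  forall x y, vle x y -> f x <= f y.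

Local Open Scope ring_scope.
Definition quilt_affine (d : nat) (g : vec d -> int) : Prop :=
  (forall x y, vle x y -> (g x <= g y)%R) /\
  exists (p : nat) (nabla : 'I_d -> rat) (B : vec d -> rat),
    (0 < p)%N /\ (forall i, (0 <= nabla i)%R) /\
    forall x, (((g x)%:~R : rat) = \sum_(i < d) nabla i * (x i)%:R + B (fun i => (x i %% p)%N))%R.

Local Close Scope ring_scope.
Definition fix_input (d : nat) (f : vec d -> nat) (i : 'I_d) (j : nat) : vec d -> nat :=
  fun x => f (fun k => if k == i then j else x k).

(* Main.v *)
Require Import Defs.
From Stdlib Require Import FunctionalExtensionality ClassicalEpsilon Classical.
From mathcomp Require Import all_boot all_order all_algebra zify ring.
Import Order.TTheory GRing.Theory Num.Theory.
Set Implicit Arguments. Unset Strict Implicit. Unset Printing Implicit Defensive.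

Lemma In_enum (T : finType) (x : T) : List.In x (enum T).
Proof.
have : x \in enum T by rewrite mem_enum.
elim: (enum T) => //= a s IH; rewrite inE => /orP [/eqP->|/IH]; by [left|right].
Qed.

Lemma reach_trans d (C : crn d) (a b c : config C) : reachable a b -> reachable b c -> reachable a c.
Proof. by elim=> [//|x y z H _ IH] /IH; apply: reach_step. Qed.
Arguments reach_trans {d C a b c}.

Unset Implicit Arguments.
Section Cons.
Variables (d : nat) (f : vec d -> nat) (m : nat) (g : 'I_m.+1 -> vec d -> int) (M P : nat).
Definition IJ : finType := ('I_d * 'I_M)%type.
Variable C : IJ -> crn d.
Hypothesis P_gt0 : 0 < P.

Definition TF (ij : IJ) : finType := species (C ij).
Definition Sg : finType := {ij : IJ & TF ij}.
Definition LS : finType := {ffun 'I_d -> 'I_(M + P)}.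
Definition SP : finType := ('I_d + (bool + (LS + ('I_m.+1 + ('I_m.+1 + (Sg + IJ))))))%type.

Notation SX l := (inl l).
Notation SY := (inr (inl true)).
Notation SLns := (inr (inl false)).
Notation SL w := (inr (inr (inl w))).
Notation SA k := (inr (inr (inr (inl k)))).
Notation SWA k := (inr (inr (inr (inr (inl k))))).
Notation SComp u := (inr (inr (inr (inr (inr (inl u)))))).
Notation SWH ij := (inr (inr (inr (inr (inr (inr ij)))))).

Definition sX (l : 'I_d) : SP := SX l.
Definition sY : SP := SY.
Definition sLns : SP := SLns.
Definition sL (w : LS) : SP := SL w.
Definition sA (k : 'I_m.+1) : SP := SA k.
Definition sWA (k : 'I_m.+1) : SP := SWA k.
Definition sWH (ij : IJ) : SP := SWH ij.
Definition HS (ij : IJ) (s : TF ij) : SP := SComp (existT TF ij s).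
Arguments HS {ij} s.

Definition redn (t : nat) : nat := if t < M then t else M + (t - M) %% P.
Lemma redn_lt t : redn t < M + P.
Proof. rewrite /redn; case: ifP => h; first by rewrite ltn_addr.
by rewrite ltn_add2l ltn_pmod. Qed.
Definition redv (t : vec d) : LS := [ffun l => Ordinal (redn_lt (t l))].
Definition upd (t : vec d) (l : 'I_d) : vec d := fun i => if i == l then (t i).+1 else t i.
Definition wv (w : LS) : vec d := fun i => w i.
Definition next (w : LS) l : LS := redv (upd (wv w) l).
Definition maxv (t : vec d) : vec d := fun i => maxn (t i) M.
Definition G k (t : vec d) : nat := absz (g k (maxv t)).
Definition inc k (w : LS) l : nat :=
  if w l < M then 0 else absz (g k (upd (maxv (wv w)) l) - g k (maxv (wv w)))%R.
Definition en (w : LS) (ij : IJ) : bool := w ij.1 <= ij.2.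
Definition w0 : LS := redv (fun _ => 0).

Definition rtype := ((SP -> nat) * (SP -> nat))%type.

Definition r_start : rtype :=
  (fun s : SP => match s with SLns => 1 | _ => 0 end,
   fun s : SP => match s with SL w => nat_of_bool (w == w0)
           | SComp u => nat_of_bool (tagged u == leaderL (C (tag u)))
           | SA k => G k (fun _ => 0) | _ => 0 end).
Definition r_abs (w : LS) (l : 'I_d) : rtype :=
  (fun s : SP => match s with SL w' => nat_of_bool (w' == w) | SX l' => nat_of_bool (l' == l) | _ => 0 end,
   fun s : SP => match s with SL w' => nat_of_bool (w' == next w l)
           | SComp u => nat_of_bool (((tag u).1 != l) && (tagged u == inX (C (tag u)) l))
           | SA k => inc k w l | _ => 0 end).
Definition embed (ij : IJ) (r : TF ij -> nat) : SP -> nat :=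
  fun s : SP => match s with SComp u =>
     if tag u == ij then r (tagged_as (existT TF ij (leaderL (C ij))) u) else 0
   | _ => 0 end.
Definition r_comp ij (r : (species (C ij) -> nat) * (species (C ij) -> nat)) : rtype :=
  (embed ij r.1, embed ij r.2).
Definition r_min (w : LS) : rtype :=
  (fun s : SP => match s with SL w' => nat_of_bool (w' == w) | SA _ => 1
           | SComp u => nat_of_bool (en w (tag u) && (tagged u == outY (C (tag u)))) | _ => 0 end,
   fun s : SP => match s with SL w' => nat_of_bool (w' == w) | SY => 1 | SWA _ => 1
           | SWH ij => nat_of_bool (en w ij) | _ => 0 end).

Definition rxns : seq rtype :=
  (r_start :: List.flat_map (fun w => List.map (r_abs w) (enum 'I_d)) (enum LS)
   ++ List.flat_map (fun ij => List.map (r_comp ij) (reactions (C ij))) (enum IJ)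
   ++ List.map r_min (enum LS))%list.

Lemma rxns_cases r : List.In r rxns ->
  [\/ r = r_start, (exists w l, r = r_abs w l),
      (exists ij r0, List.In r0 (reactions (C ij)) /\ r = r_comp ij r0)
    | exists w, r = r_min w].
Proof.
rewrite /rxns /= => [[<-|]]; first by constructor 1.
rewrite !List.in_app_iff => [[|[]]].
- move/List.in_flat_map => [w [_ /List.in_map_iff [l [<- _]]]]; constructor 2; eauto.
- move/List.in_flat_map => [ij [_ /List.in_map_iff [r0 [<- H]]]]; constructor 3; eauto.
- move/List.in_map_iff => [w [<- _]]; constructor 4; eauto.
Qed.

Lemma In_start : List.In r_start rxns. Proof. by left. Qed.
Lemma In_abs w l : List.In (r_abs w l) rxns.
Proof. right; apply/List.in_app_iff; left; apply/List.in_flat_map; exists w; split; first exact: In_enum.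
by apply/List.in_map_iff; exists l; split => //; apply: In_enum. Qed.
Lemma In_comp ij r0 : List.In r0 (reactions (C ij)) -> List.In (r_comp ij r0) rxns.
Proof. move=> H; right; apply/List.in_app_iff; right; apply/List.in_app_iff; left.
apply/List.in_flat_map; exists ij; split; first exact: In_enum.
by apply/List.in_map_iff; exists r0. Qed.
Lemma In_min w : List.In (r_min w) rxns.
Proof. right; apply/List.in_app_iff; right; apply/List.in_app_iff; right.
by apply/List.in_map_iff; exists w; split => //; apply: In_enum. Qed.

Lemma SX_inj : injective sX.
Proof. by move=> a b []. Qed.

Definition Comp : crn d :=
  @Crn d SP rxns sX sY sLns SX_inj (fun i => ltac:(discriminate))
       (fun i => ltac:(discriminate)) ltac:(discriminate).


Definition xin ij (c : SP -> nat) (s : TF ij) : nat :=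
  if [pick l | s == inX (C ij) l] is Some l then (if l == ij.1 then 0 else c (sX l)) else 0.
Definition virt ij (c : SP -> nat) : TF ij -> nat := fun s =>
  c (HS s) + (if s == leaderL (C ij) then c sLns else 0)
  + (if s == outY (C ij) then c (sWH ij) else 0) + xin ij c s.

Lemma virt_lin ij (c c' r1 r2 : SP -> nat) :
  (forall s, r1 s <= c s) -> (forall s, c' s = c s - r1 s + r2 s) ->
  forall s, virt ij c' s = virt ij c s - virt ij r1 s + virt ij r2 s /\ virt ij r1 s <= virt ij c s.
Proof.
move=> H1 H2 s; rewrite /virt /xin !H2.
have h1 := H1 (HS s); have h2 := H1 sLns; have h3 := H1 (sWH ij).
case: pickP => [l _|_]; last first.
  by case: (s == leaderL _); case: (s == outY _); lia.
have h4 := H1 (sX l); rewrite !H2.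
by case: (l == ij.1); case: (s == leaderL _); case: (s == outY _); lia.
Qed.

Lemma virt_neutral ij (c c' r1 r2 : SP -> nat) :
  (forall s, r1 s <= c s) -> (forall s, c' s = c s - r1 s + r2 s) ->
  (forall s, virt ij r1 s = virt ij r2 s) -> virt ij c' = virt ij c.
Proof.
move=> H1 H2 H3; apply: functional_extensionality => s.
have [-> h] := virt_lin ij c c' _ _ H1 H2 s; rewrite H3 in h *; lia.
Qed.

Lemma HS_embed ij r (s : TF ij) : embed ij r (HS s) = r s.
Proof. by rewrite /embed /HS /= eqxx tagged_asE. Qed.

Lemma HS_embed_ne ij ij' r (s : TF ij) : ij != ij' -> embed ij' r (HS s) = 0.
Proof. by rewrite /embed /HS /= => /negbTE->. Qed.

Lemma pick_none ij (s : TF ij) : (forall l, s != inX (C ij) l) -> [pick l | s == inX (C ij) l] = None.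
Proof. move=> H; case: pickP => // l; by rewrite (negbTE (H l)). Qed.

Lemma inX_leader ij l : (inX (C ij) l == leaderL (C ij)) = false.
Proof. by apply/eqP => h; exact: (@leaderL_notin _ (C ij) l (esym h)). Qed.
Lemma inX_out ij l : (inX (C ij) l == outY (C ij)) = false.
Proof. by apply/eqP => h; exact: (@outY_notin _ (C ij) l (esym h)). Qed.
Lemma out_leader ij : (outY (C ij) == leaderL (C ij)) = false.
Proof. by apply/eqP => h; exact: (@leader_neq_out _ (C ij) (esym h)). Qed.

Lemma ord_aux (a b i : 'I_d) :
  (if a == i then 0 else nat_of_bool (a == b)) = nat_of_bool ((i != b) && (a == b)).
Proof.
case: (eqVneq a b) => [->|_]; last by rewrite ?andbF; case: ifP.
by case: (eqVneq b i) => [_|_]; rewrite ?eqxx.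
Qed.

Lemma virt_step ij (c c' : SP -> nat) : step (C:=Comp) c c' -> reachable (virt ij c) (virt ij c').
Proof.
case=> r Hr [H1 H2].
case: (rxns_cases _ Hr) => [E|[w [l E]]|[ij' [r0 [Hr0 E]]]|[w E]]; subst r.
- rewrite (virt_neutral ij c c' _ _ H1 H2); first exact: reach_refl.
  move=> s; rewrite /virt /xin /=.
  by case: pickP => [l _|_]; [case: (l == ij.1)|]; case: (s == leaderL _); case: (s == outY _).
- rewrite (virt_neutral ij c c' _ _ H1 H2); first exact: reach_refl.
  move=> s; rewrite /virt /xin /=.
  case: pickP => [l' /eqP ->|Hn].
    rewrite (inj_eq (@inX_inj _ _)) inX_leader inX_out.
    rewrite !if_same !addn0 !add0n; exact: ord_aux.
  have -> : (s == inX (C ij) l) = false by exact: Hn.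
  by rewrite andbF; case: ifP; case: ifP.
- case: (ij' =P ij) => [E|/eqP ne].
  + subst ij'. apply: (@reach_step _ _ _ (virt ij c') _); last exact: reach_refl.
    have e1 : forall s, (r_comp ij r0).1 (HS s) = r0.1 s := fun s => HS_embed ij r0.1 s.
    have e2 : forall s, (r_comp ij r0).2 (HS s) = r0.2 s := fun s => HS_embed ij r0.2 s.
    exists r0 => //; split.
    * by move=> s; have [_ h] := virt_lin ij c c' _ _ H1 H2 s; move: h; rewrite /virt /xin e1 /=;
      case: pickP => [l _|_]; [case: (l == ij.1)|]; case: (s == leaderL _); case: (s == outY _); lia.
    * by move=> s; have [h _] := virt_lin ij c c' _ _ H1 H2 s; move: h; rewrite /virt /xin e1 e2 /=;
      case: pickP => [l _|_]; [case: (l == ij.1)|]; case: (s == leaderL _); case: (s == outY _); lia.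
  + rewrite (virt_neutral ij c c' _ _ H1 H2); first exact: reach_refl.
    have ne' : ij != ij' by rewrite eq_sym.
    move=> s; have e1 := HS_embed_ne ij ij' r0.1 s ne'; have e2 := HS_embed_ne ij ij' r0.2 s ne'.
    rewrite /virt /xin; rewrite [(r_comp ij' r0).1 (HS s)]e1 [(r_comp ij' r0).2 (HS s)]e2 /=.
    by case: pickP => [l _|_]; [case: (l == ij.1)|]; case: (s == leaderL _); case: (s == outY _).
- rewrite (virt_neutral ij c c' _ _ H1 H2); first exact: reach_refl.
  move=> s; rewrite /virt /xin /=.
  by case: pickP => [l _|_]; [case: (l == ij.1)|]; case: (s == leaderL _); case: (s == outY _); case: (en w ij).
Qed.

Lemma virt_reach ij (c c' : SP -> nat) : reachable (C:=Comp) c c' -> reachable (virt ij c) (virt ij c').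
Proof. elim=> [x|x y z Hs _ IH]; first exact: reach_refl. exact: reach_trans (virt_step ij _ _ Hs) IH. Qed.


Hypothesis Hg_mono : forall k x y, vle x y -> (g k x <= g k y)%R.
Hypothesis Hg_per : forall k (y z : vec d), (forall i, y i %% P = z i %% P) ->
  forall l, (g k (upd y l) - g k y = g k (upd z l) - g k z)%R.
Hypothesis Hg_nonneg : forall k t, (0 <= g k (maxv t))%R.

Lemma redn_small t : t < M -> redn t = t.
Proof. by rewrite /redn => ->. Qed.
Lemma redn_big t : M <= t -> redn t = M + (t - M) %% P.
Proof. by rewrite /redn ltnNge => ->. Qed.

Lemma redn_idem t : redn (redn t) = redn t.
Proof.
case: (ltnP t M) => h; first by rewrite !redn_small.
rewrite (redn_big t h) redn_big ?leq_addr //.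
by rewrite addKn modn_mod.
Qed.

Lemma redn_S t : redn t.+1 = redn (redn t).+1.
Proof.
case: (ltnP t M) => h.
  by rewrite (redn_small t h).
rewrite (redn_big t h) !redn_big; try lia.
congr (M + _).
have -> : t.+1 - M = (t - M) + 1 by lia.
have -> : (M + (t - M) %% P).+1 - M = (t - M) %% P + 1 by lia.
by rewrite modnDml.
Qed.

Lemma redv_upd t l : redv (upd t l) = next (redv t) l.
Proof.
apply/ffunP => i; apply: val_inj; rewrite /next /redv !ffunE /= /upd /wv !ffunE /=.
by case: (i == l); [apply: redn_S | rewrite redn_idem].
Qed.

Lemma en_redv t (ij : IJ) : en (redv t) ij = (t ij.1 <= ij.2).
Proof.
case: ij => i j; rewrite /en /redv ffunE /=; have hj := ltn_ord j.
case: (ltnP (t i) M) => h; first by rewrite redn_small.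
rewrite redn_big //; apply/idP/idP => h2; lia.
Qed.

Lemma vle_eq (k : 'I_m.+1) (a b : vec d) : (forall i, a i = b i) -> g k a = g k b.
Proof. move=> H; have <- // : a = b by apply: functional_extensionality. Qed.

Lemma G_upd k t l : G k (upd t l) = G k t + inc k (redv t) l.
Proof.
rewrite /G /inc /redv ffunE /=.
case: (ltnP (t l) M) => h.
  rewrite (redn_small _ h) h addn0; congr absz; apply: vle_eq => i.
  rewrite /maxv /upd; case: eqP => [->|//]; lia.
have hw : M <= redn (t l) by rewrite redn_big // leq_addr.
rewrite ltnNge hw /=.
have E1 : g k (maxv (upd t l)) = g k (upd (maxv t) l).
  by apply: vle_eq => i; rewrite /maxv /upd; case: eqP => [->|//]; lia.
have E2 := Hg_per k (maxv t) (maxv (wv [ffun l0 => Ordinal (redn_lt (t l0))])).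
rewrite E1; set z := maxv (wv _) in E2 *.
have Hz : forall i, maxv t i %% P = z i %% P.
  move=> i; rewrite /z /maxv /wv ffunE.
  have -> : nat_of_ord (Ordinal (redn_lt (t i))) = redn (t i) by [].
  have [hi|hi] := ltnP (t i) M; first by rewrite redn_small // (maxn_idPr (ltnW hi)).
  rewrite redn_big //.
  rewrite {1}(_ : t i = M + (t i - M)); last by lia.
  have -> : maxn (M + (t i - M) %% P) M = M + (t i - M) %% P by lia.
  by rewrite modnDmr.
have := E2 Hz l => <-.
have h1 := Hg_nonneg k t.
have h2 : (g k (maxv t) <= g k (upd (maxv t) l))%R.
  by apply: Hg_mono => i; rewrite /upd; case: (i == l).
lia.
Qed.


Definition tt (x : vec d) (c : SP -> nat) : vec d := fun l => x l - c (sX l).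
Definition pre (x : vec d) (c : SP -> nat) :=
  [/\ c sLns = 1, (forall w, c (sL w) = 0), (forall l, c (sX l) = x l), c sY = 0
    & (forall k, c (sA k) = 0 /\ c (sWA k) = 0)] /\ (forall ij, c (sWH ij) = 0).
Definition post (x : vec d) (c : SP -> nat) := exists w : LS,
  [/\ c sLns = 0, c (sL w) = 1, (forall w', 0 < c (sL w') -> w' = w), w = redv (tt x c)
    & (forall l, c (sX l) <= x l)] /\
  [/\ (forall k, c (sA k) + c (sWA k) = G k (tt x c)), (forall k, c (sWA k) = c sY)
    & (forall ij : IJ, tt x c ij.1 <= ij.2 -> c (sWH ij) = c sY)].
Definition Inv x c := pre x c \/ post x c.

Lemma Inv_noncomp x (c c' : SP -> nat) :
  (forall s : SP, (if s is SComp _ then false else true) -> c' s = c s) -> Inv x c -> Inv x c'.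
Proof.
move=> H.
have Ht : tt x c' = tt x c by apply: functional_extensionality => l; rewrite /tt H.
move=> [[[h1 h2 h3 h4 h5] h6]|[w [[h1 h2 h3 h4 h5] [h6 h7 h8]]]]; [left|right].
- split; first split.
  + by rewrite H.
  + by move=> w; rewrite H.
  + by move=> l; rewrite H.
  + by rewrite H.
  + by move=> k; rewrite !H.
  + by move=> ij; rewrite H.
- exists w; rewrite Ht; split; split.
  + by rewrite H.
  + by rewrite H.
  + by move=> w'; rewrite H //; apply: h3.
  + done.
  + by move=> l; rewrite H.
  + by move=> k; rewrite !H.
  + by move=> k; rewrite !H.
  + by move=> ij hij; rewrite !H //; apply: h8.
Qed.

Lemma Inv_step x (c c' : SP -> nat) : Inv x c -> step (C:=Comp) c c' -> Inv x c'.
Proof.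
move=> HI [r Hr [H1 H2]].
case: (rxns_cases _ Hr) => [E|[w [l E]]|[ij [r0 [_ E]]]|[w E]]; subst r.
-
  case: HI => [[[h1 h2 h3 h4 h5] h6]|[w [[h1 _ _ _ _] _]]]; last first.
    by have := H1 sLns; rewrite h1.
  have Ht : tt x c' = (fun _ => 0).
    by apply: functional_extensionality => l; rewrite /tt H2 /= h3; lia.
  right; exists w0; rewrite Ht; split; split.
  + by rewrite H2 h1.
  + by rewrite H2 h2 /= eqxx.
  + move=> w'; rewrite H2 h2 /=; case E: (_ == _) => // _; apply/eqP; exact: E.
  + done.
  + by move=> l; rewrite H2 /= h3; lia.
  + by move=> k; rewrite !H2 /=; have [a b] := h5 k; rewrite a b !subn0 !add0n !addn0.
  + by move=> k; rewrite !H2 /=; have [a b] := h5 k; rewrite b h4.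
  + by move=> ij _; rewrite !H2 /= h6 h4.
-
  case: HI => [[[h1 h2 h3 h4 h5] h6]|[w1 [[h1 h2 h3 h4 h5] [h6 h7 h8]]]].
    by have := H1 (sL w); rewrite h2 /= eqxx.
  have ew : w = w1 by apply: h3; have := H1 (sL w); rewrite /= eqxx.
  move: h2 h3 h4; rewrite -ew => h2 h3 h4.
  have hx : 0 < c (sX l) by have := H1 (sX l); rewrite /= eqxx.
  have hxl := h5 l.
  have Ht : tt x c' = upd (tt x c) l.
    apply: functional_extensionality => i; rewrite /tt /upd H2 /=.
    by case: eqP => [->|_] /=; lia.
  right; exists (next w l); rewrite Ht; split; split.
  + by rewrite H2 h1.
  + rewrite H2 /= eqxx; case: (eqVneq (next w l) w) => [->|ne]; first by rewrite h2.
    have : c (sL (next w l)) = 0.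
      by case: (posnP (c (sL (next w l)))) => // /h3 e; rewrite e eqxx in ne.
    by move=> ->.
  + move=> w'; rewrite H2 /=; case: (eqVneq w' (next w l)) => // ne.
    case: (eqVneq w' w) => [->|ne2]; first by rewrite h2.
    by move=> /=; rewrite subn0 addn0 => /h3 e; rewrite e eqxx in ne2.
  + by rewrite h4 redv_upd.
  + move=> i; rewrite H2 /=; have := h5 i; lia.
  + by move=> k; rewrite !H2 /= G_upd -h4 -(h6 k); lia.
  + by move=> k; rewrite !H2 /= h7.
  + move=> ij hij; rewrite !H2 /= !subn0 !addn0; apply: h8.
    by move: hij; rewrite /upd; case: (ij.1 == l); lia.
-
  apply: Inv_noncomp HI => s hs; rewrite H2.
  by case: s hs => [l|[b|[w|[k|[k|[u|ij']]]]]] //= _; rewrite subn0 addn0.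
-
  case: HI => [[[h1 h2 h3 h4 h5] h6]|[w1 [[h1 h2 h3 h4 h5] [h6 h7 h8]]]].
    by have := H1 (sL w); rewrite h2 /= eqxx.
  have ew : w = w1 by apply: h3; have := H1 (sL w); rewrite /= eqxx.
  move: h2 h3 h4; rewrite -ew => h2 h3 h4.
  have Ht : tt x c' = tt x c.
    by apply: functional_extensionality => i; rewrite /tt H2 /= subn0 addn0.
  right; exists w; rewrite Ht; split; split.
  + by rewrite H2 h1.
  + by rewrite H2 /= eqxx h2.
  + move=> w'; rewrite H2 /=; case: (eqVneq w' w) => [->|ne] //.
    by rewrite /= subn0 addn0 => /h3.
  + done.
  + by move=> i; rewrite H2 /= subn0 addn0.
  + move=> k; rewrite !H2 /=; have := H1 (sA k); rewrite /= => hk; have := h6 k; lia.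
  + by move=> k; rewrite !H2 /= h7.
  + move=> ij hij; rewrite !H2 /= (h8 _ hij).
    by rewrite h4 en_redv hij.
Qed.

Lemma Inv_reach x (c c' : SP -> nat) : reachable (C:=Comp) c c' -> Inv x c -> Inv x c'.
Proof. elim=> // a b e Hs _ IH HI; apply: IH; exact: Inv_step HI Hs. Qed.


Lemma init_sX x l : @init_config d Comp x (sX l) = x l.
Proof.
rewrite /init_config /=; case: pickP => [i /eqP E|/(_ l)]; last by rewrite eqxx.
by have := SX_inj _ _ E => ->.
Qed.
Lemma init_sLns x : @init_config d Comp x sLns = 1.
Proof. by rewrite /init_config eqxx. Qed.
Lemma init_other x s : s != sLns -> (forall l, s != sX l) -> @init_config d Comp x s = 0.
Proof.
move=> h1 h2; rewrite /init_config /= (negbTE h1).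
by case: pickP => [i /eqP E|//]; move: (h2 i); rewrite E eqxx.
Qed.

Lemma Inv_init x : Inv x (@init_config d Comp x).
Proof.
left; split; first split.
- exact: init_sLns.
- by move=> w; apply: init_other.
- exact: init_sX.
- by apply: init_other.
- by move=> k; split; apply: init_other.
- by move=> ij; apply: init_other.
Qed.

Lemma step_mono (c c' : SP -> nat) : step (C:=Comp) c c' ->
  [/\ c' sLns <= c sLns, (forall l, c' (sX l) <= c (sX l)) & c sY <= c' sY].
Proof.
move=> [r Hr [H1 H2]].
case: (rxns_cases _ Hr) => [E|[w [l E]]|[ij [r0 [_ E]]]|[w E]]; subst r;
  split; rewrite ?H2 /=; try (move=> l0; rewrite H2 /=); lia.
Qed.

Lemma reach_mono (c c' : SP -> nat) : reachable (C:=Comp) c c' ->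
  [/\ c' sLns <= c sLns, (forall l, c' (sX l) <= c (sX l)) & c sY <= c' sY].
Proof.
elim=> [a|a b e Hs _ [IH1 IH2 IH3]]; first by split.
have [h1 h2 h3] := step_mono _ _ Hs; split; first lia.
  by move=> l; have := h2 l; have := IH2 l; lia.
lia.
Qed.

Lemma chain (Good : (SP -> nat) -> Prop) (T : Type) (Q : T -> (SP -> nat) -> Prop) :
  (forall c c', Good c -> reachable (C:=Comp) c c' -> Good c') ->
  (forall t c c', Q t c -> reachable (C:=Comp) c c' -> Q t c') ->
  (forall t c, Good c -> exists c', reachable (C:=Comp) c c' /\ Q t c') ->
  forall s c, Good c -> exists c', reachable (C:=Comp) c c' /\ Good c' /\ forall t, List.In t s -> Q t c'.
Proof.
move=> HG HQ Hach; elim=> [|t s IH] c Gc.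
  by exists c; split; [apply: reach_refl|split].
have [c1 [R1 [G1 Q1]]] := IH c Gc.
have [c2 [R2 Q2]] := Hach t c1 G1.
exists c2; split; first exact: reach_trans R1 R2.
split; first exact: HG R2.
by move=> t' [<-|/Q1 h] //; apply: HQ h R2.
Qed.

Definition fire (r : rtype) (c : SP -> nat) : SP -> nat := fun s => c s - r.1 s + r.2 s.

Lemma fire_step r c : List.In r rxns -> (forall s, r.1 s <= c s) -> step (C:=Comp) c (fire r c).
Proof. by move=> Hr H; exists r. Qed.

Lemma post_of_pre0 x c : Inv x c -> c sLns = 0 -> post x c.
Proof. by case=> // [[[h _ _ _ _] _]] h'; rewrite h in h'. Qed.

Lemma phase1 x c : Inv x c -> exists c1, reachable (C:=Comp) c c1 /\ c1 sLns = 0.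
Proof.
case=> [[[h1 h2 h3 h4 h5] h6]|[w [[h1 _ _ _ _] _]]]; last by exists c; split => //; apply: reach_refl.
exists (fire r_start c); split.
  apply: (reach_step (fire_step _ _ In_start _)); last exact: reach_refl.
  by case=> [l|[[]|[w|[k|[k|[u|ij]]]]]] //=; rewrite -/sLns h1.
by rewrite /fire /= h1.
Qed.

Lemma drain x l : forall c, reachable (C:=Comp) (@init_config d Comp x) c -> c sLns = 0 ->
  exists c', reachable (C:=Comp) c c' /\ c' (sX l) = 0.
Proof.
move=> c; move Hn: (c (sX l)) => n; elim: n c Hn => [|n IH] c Hn R0 hL.
  by exists c; split => //; apply: reach_refl.
have HI := Inv_reach x _ _ R0 (Inv_init x).
have [w [[h1 h2 h3 h4 h5] _]] := post_of_pre0 _ _ HI hL.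
have Hs : step (C:=Comp) c (fire (r_abs w l) c).
  apply: fire_step; first exact: In_abs.
  case=> [l'|[b|[w'|[k|[k|[u|ij]]]]]] //=.
    by case: (l' =P l) => [->|] /=; [rewrite -/(sX l) Hn|].
  by case: (w' =P w) => [->|] /=; [rewrite -/(sL w) h2|].
have e1 : fire (r_abs w l) c (sX l) = n by rewrite /fire /= eqxx Hn; lia.
have e2 : fire (r_abs w l) c sLns = 0 by rewrite /fire /= h1.
have [c' [R' E']] := IH (fire (r_abs w l) c) e1 (reach_trans R0 (reach_step Hs (reach_refl _))) e2.
by exists c'; split => //; apply: reach_step Hs R'.
Qed.


Hypothesis HC : forall ij : IJ,
  output_oblivious (C ij) /\ stably_computes (C ij) (fix_input f ij.1 ij.2).

Lemma virt_clean ij (c : SP -> nat) s : c sLns = 0 -> (forall l, c (sX l) = 0) ->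
  virt ij c s = c (HS s) + (if s == outY (C ij) then c (sWH ij) else 0).
Proof.
move=> hL hX; rewrite /virt /xin hL if_same ?addn0.
case: pickP => [l _|_]; last by rewrite ?addn0.
by case: (l == ij.1); rewrite ?hX ?addn0.
Qed.

Lemma virt_embed ij r s : virt ij (embed ij r) s = r s.
Proof.
rewrite /virt /xin HS_embed /= !if_same.
by case: pickP => [l _|_]; rewrite ?if_same !addn0.
Qed.

Lemma embed_cases ij r (s : SP) : (exists s', s = HS s' /\ embed ij r s = r s') \/ embed ij r s = 0.
Proof.
case: s => [l|[b|[w|[k|[k|[[ij' s']|ij']]]]]]; try by right.
case: (eqVneq ij' ij) => [E|ne].
  subst ij'; left; exists s'; split => //; exact: HS_embed.
by right; rewrite /embed /= (negbTE ne).
Qed.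

Lemma lift ij (u u' : config (C ij)) : reachable u u' -> forall c : SP -> nat,
  virt ij c = u -> c sLns = 0 -> (forall l, c (sX l) = 0) ->
  exists c', reachable (C:=Comp) c c' /\ virt ij c' = u'.
Proof.
elim=> [u0|u0 u1 u2 [r0 Hr0 [H1 H2]] _ IH] c Ev hL hX.
  by exists c; split => //; apply: reach_refl.
have H1' : forall s, (r_comp ij r0).1 s <= c s.
  move=> s; change ((r_comp ij r0).1 s) with (embed ij r0.1 s).
  case: (embed_cases ij r0.1 s) => [[s' [-> ->]]|->] //.
  have := H1 s'; rewrite -Ev virt_clean //.
  case: (eqVneq s' (outY (C ij))) => [->|ne]; first by rewrite ((HC ij).1 r0 Hr0).
  by rewrite ?(negbTE ne) /= addn0.
have Hs : step (C:=Comp) c (fire (r_comp ij r0) c) by apply: fire_step => //; apply: In_comp.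
have E1 : virt ij (fire (r_comp ij r0) c) = u1.
  apply: functional_extensionality => s.
  have [-> _] := virt_lin ij c (fire (r_comp ij r0) c) _ _ H1' (fun s => erefl) s.
  by rewrite !virt_embed Ev H2.
have e2 : fire (r_comp ij r0) c sLns = 0 by rewrite /fire /= hL.
have e3 : forall l, fire (r_comp ij r0) c (sX l) = 0 by move=> l; rewrite /fire /= hX.
have [c' [R' E']] := IH _ E1 e2 e3.
by exists c'; split => //; apply: reach_step Hs R'.
Qed.

Definition xi (i : 'I_d) (x : vec d) : vec d := fun l => if l == i then 0 else x l.

Lemma virt_init ij x : virt ij (@init_config d Comp x) = @init_config d (C ij) (xi ij.1 x).
Proof.
apply: functional_extensionality => s.
rewrite /virt /xin init_sLns (init_other x (HS s)) // (init_other x (sWH ij)) // if_same.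
case: (eqVneq s (leaderL (C ij))) => [->|ne].
  rewrite pick_none; last by move=> l; rewrite eq_sym inX_leader.
  by rewrite [in RHS]/init_config eqxx.
rewrite [in RHS]/init_config (negbTE ne).
case: pickP => [l _|_]; last by rewrite !addn0.
by rewrite init_sX /xi; case: (l == ij.1).
Qed.

Definition done_ x ij (c : SP -> nat) :=
  stable (C:=C ij) (virt ij c) /\ virt ij c (outY (C ij)) = fix_input f ij.1 ij.2 (xi ij.1 x).

Lemma done_pers x ij c c' : done_ x ij c -> reachable (C:=Comp) c c' -> done_ x ij c'.
Proof.
move=> [S V] R; have R' := virt_reach ij _ _ R.
have E : virt ij c' (outY (C ij)) = virt ij c (outY (C ij)) by apply: S.
split; last by rewrite E.
by move=> u Ru; rewrite E; apply: S; apply: reach_trans R' Ru.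
Qed.

Lemma phase3 x ij c : reachable (C:=Comp) (@init_config d Comp x) c -> c sLns = 0 ->
  (forall l, c (sX l) = 0) -> exists c', reachable (C:=Comp) c c' /\ done_ x ij c'.
Proof.
move=> R0 hL hX.
have R := virt_reach ij _ _ R0; rewrite virt_init in R.
have [O [RO SO VO]] := (HC ij).2 _ _ R.
have [c' [R' E']] := lift ij _ _ RO c erefl hL hX.
by exists c'; split => //; rewrite /done_ E'.
Qed.


Lemma tt_x x (c : SP -> nat) : (forall l, c (sX l) = 0) -> tt x c = x.
Proof. by move=> h; apply: functional_extensionality => l; rewrite /tt h subn0. Qed.

Definition Good3 x (c : SP -> nat) := [/\ reachable (C:=Comp) (@init_config d Comp x) c,
  c sLns = 0 & forall l, c (sX l) = 0].

Lemma Good3_pers x c c' : Good3 x c -> reachable (C:=Comp) c c' -> Good3 x c'.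
Proof.
move=> [R0 hL hX] R; have [m1 m2 _] := reach_mono _ _ R; split.
- exact: reach_trans R0 R.
- by move: m1; rewrite hL; case: (c' sLns).
- by move=> l; move: (m2 l); rewrite hX; case: (c' (sX l)).
Qed.

Lemma exh_stop x (c : SP -> nat) :
  ~ ((forall k, 0 < c (sA k)) /\ (forall ij, en (redv x) ij -> 0 < c (HS (outY (C ij))))) ->
  (exists k, c (sA k) = 0) \/ (exists ij, en (redv x) ij /\ c (HS (outY (C ij))) = 0).
Proof.
move=> hno; case: (not_and_or _ _ hno) => H.
  have [y hy] := not_all_ex_not _ _ H; left.
  by exists y; move: hy; case: (c (sA y)).
have [y hy] := not_all_ex_not _ _ H; right.
exists y; have [hy1 hy2] := imply_to_and _ _ hy; split => //; move: hy2; by case: (c (HS _)).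
Qed.

Lemma exhaust x n : forall c, c (sA ord0) <= n -> Good3 x c ->
  exists c', reachable (C:=Comp) c c' /\
   ((exists k, c' (sA k) = 0) \/ (exists ij, en (redv x) ij /\ c' (HS (outY (C ij))) = 0)).
Proof.
elim: n => [|n IH] c hn G3; have [R0 hL hX] := G3;
  have [w [[h1 h2 h3 h4 h5] _]] := post_of_pre0 _ _ (Inv_reach x _ _ R0 (Inv_init x)) hL;
  rewrite tt_x // in h4; subst w;
  (case: (classic ((forall k, 0 < c (sA k)) /\
            (forall ij, en (redv x) ij -> 0 < c (HS (outY (C ij)))))) => [[hA hH]|hno];
   last by exists c; split; [exact: reach_refl| exact: exh_stop]).
  by have := hA ord0; rewrite leqn0 in hn; rewrite (eqP hn).
have Hs : step (C:=Comp) c (fire (r_min (redv x)) c).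
  apply: fire_step; first exact: In_min.
  case=> [l|[b|[w'|[k|[k|[[ij s']|ij]]]]]] //=.
  - by case: (w' =P redv x) => [->|] /=; [rewrite -/(sL (redv x)) h2|].
  - exact: hA.
  - case E: (en (redv x) ij) => //=.
    case: (s' =P outY (C ij)) => [->|] //=.
    exact: hH.
have G3' := Good3_pers _ _ _ G3 (reach_step Hs (reach_refl _)).
have hn' : fire (r_min (redv x)) c (sA ord0) <= n.
  by rewrite /fire /=; have := hA ord0; lia.
have [c' [R' E']] := IH _ hn' G3'.
by exists c'; split => //; apply: reach_step Hs R'.
Qed.


Variable n : vec d.
Hypothesis Hf_mono : nondecreasing_nat f.
Hypothesis HnM : forall i, n i <= M.
Hypothesis Hmin : forall x, vle n x ->
  (forall k, (Posz (f x) <= g k x)%R) /\ exists k, Posz (f x) = g k x.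

Lemma f_le_G x k : f x <= G k x.
Proof.
have hv : vle n (maxv x) by move=> i; rewrite /maxv; have := HnM i; lia.
have [h _] := Hmin _ hv; have := h k.
have : f x <= f (maxv x) by apply: Hf_mono => i; rewrite /maxv; lia.
rewrite /G; lia.
Qed.

Lemma f_le_TH x (ij : IJ) : x ij.1 <= ij.2 -> f x <= fix_input f ij.1 ij.2 (xi ij.1 x).
Proof.
move=> h; apply: Hf_mono => i; rewrite /xi.
by case: (eqVneq i ij.1) => [->|ne] //.
Qed.

Lemma G_eq x : (forall i, M <= x i) -> exists k, G k x = f x.
Proof.
move=> h.
have E : maxv x = x by apply: functional_extensionality => i; rewrite /maxv; have := h i; lia.
have hv : vle n x by move=> i; have := HnM i; have := h i; lia.
have [_ [k hk]] := Hmin _ hv.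
by exists k; rewrite /G E -hk.
Qed.

Lemma TH_eq x i (h : x i < M) : fix_input f i (Ordinal h) (xi i x) = f x.
Proof.
rewrite /fix_input /xi; congr f; apply: functional_extensionality => k.
by case: (eqVneq k i) => [->|].
Qed.

Lemma Comp_oblivious : output_oblivious Comp.
Proof.
move=> r Hr; case: (rxns_cases _ Hr) => [E|[w [l E]]|[ij [r0 [_ E]]]|[w E]]; by subst r.
Qed.

Definition Good2 x (c : SP -> nat) :=
  reachable (C:=Comp) (@init_config d Comp x) c /\ c sLns = 0.
Lemma Good2_pers x c c' : Good2 x c -> reachable (C:=Comp) c c' -> Good2 x c'.
Proof.
move=> [Ra hL] R; have [m1 _ _] := reach_mono _ _ R; split; first exact: reach_trans Ra R.
by move: m1; rewrite hL; case: (c' sLns).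
Qed.
Lemma Q2_pers l (c c' : SP -> nat) : c (sX l) = 0 -> reachable (C:=Comp) c c' -> c' (sX l) = 0.
Proof. by move=> h R; have [_ m2 _] := reach_mono _ _ R; move: (m2 l); rewrite h; case: (c' (sX l)). Qed.
Lemma ach2 x l c : Good2 x c -> exists c', reachable (C:=Comp) c c' /\ c' (sX l) = 0.
Proof. by move=> [Ra hL]; exact: (drain x l c Ra hL). Qed.
Lemma ach3 x ij c : Good3 x c -> exists c', reachable (C:=Comp) c c' /\ done_ x ij c'.
Proof. by move=> [Ra hL hX]; exact: (phase3 x ij c Ra hL hX). Qed.

Lemma Comp_computes : stably_computes Comp f.
Proof.
move=> x c Rc.
have [c1 [R1 L1]] := phase1 x c (Inv_reach x _ _ Rc (Inv_init x)).
have [c2 [R2 [[G2a G2b] Q2]]] :=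
  chain (Good2 x) _ (fun l c => c (sX l) = 0) (Good2_pers x) Q2_pers (ach2 x)
        (enum 'I_d) c1 (conj (reach_trans Rc R1) L1).
have hX2 : forall l, c2 (sX l) = 0 by move=> l; apply: Q2; apply: In_enum.
have [c3 [R3 [[R3a L3 X3] Q3]]] :=
  chain (Good3 x) _ (done_ x) (Good3_pers x) (done_pers x) (ach3 x)
        (enum IJ) c2 (And3 G2a G2b hX2).
have D3 : forall ij, done_ x ij c3 by move=> ij; apply: Q3; apply: In_enum.
have [O [RO EO]] := exhaust x _ c3 (leqnn _) (And3 R3a L3 X3).
have GO := Good3_pers _ _ _ (And3 R3a L3 X3) RO.
have DO : forall ij, done_ x ij O by move=> ij; apply: done_pers (D3 ij) RO.
have facts : forall c', Good3 x c' ->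
   (forall k, c' (sA k) + c' sY = G k x) /\
   (forall ij : IJ, x ij.1 <= ij.2 -> c' (sWH ij) = c' sY).
  move=> c' [Ra hL hX].
  have [w [_ [h6 h7 h8]]] := post_of_pre0 _ _ (Inv_reach x _ _ Ra (Inv_init x)) hL.
  rewrite tt_x // in h6 h8; split; first by move=> k; rewrite -(h7 k) h6.
  exact: h8.
have vH : forall c' ij, Good3 x c' -> virt ij c' (outY (C ij)) = c' (HS (outY (C ij))) + c' (sWH ij).
  by move=> c' ij [_ hL hX]; rewrite virt_clean // eqxx.
have [fA fH] := facts O GO.
have ValO : O sY = f x.
  apply/eqP; rewrite eqn_leq; apply/andP; split.
  - case: (classic (forall i, M <= x i)) => [hM|hM].
      have [k hk] := G_eq x hM; have := fA k; lia.
    have [i hi] := not_all_ex_not _ _ hM.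
    have hi' : x i < M by rewrite ltnNge; apply/negP.
    have := TH_eq x i hi'.
    have [_ V] := DO (i, Ordinal hi'); rewrite (vH _ _ GO) /= in V.
    have := fH (i, Ordinal hi') (leqnn _); simpl => e.
    by rewrite -V e => <-; lia.
  - case: EO => [[k hk]|[ij [hen hij]]].
      by have := fA k; have := f_le_G x k; rewrite hk; lia.
    rewrite en_redv in hen.
    have [_ V] := DO ij; rewrite (vH _ _ GO) hij (fH ij hen) add0n in V.
    by rewrite V; apply: f_le_TH.
exists O; split => //; first exact: reach_trans R1 (reach_trans R2 (reach_trans R3 RO)).
move=> c' R'; change (c' sY = O sY).
have G' := Good3_pers _ _ _ GO R'.
have [_ _ mY] := reach_mono _ _ R'.
have [fA' fH'] := facts c' G'.
apply/eqP; rewrite eqn_leq mY andbT.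
case: EO => [[k hk]|[ij [hen hij]]].
  by have := fA' k; have := fA k; rewrite hk; lia.
rewrite en_redv in hen.
have [S V] := DO ij.
have [_ V'] := done_pers _ _ _ _ (DO ij) R'.
rewrite (vH _ _ GO) hij (fH ij hen) add0n in V.
rewrite (vH _ _ G') (fH' ij hen) in V'.
lia.
Qed.

End Cons.

Lemma aux (V : comRingType) (a b c S : V) : (S + a + b - (S + c) = a + b - c)%R.
Proof. ring. Qed.
Lemma aux2 (V : comRingType) (a b S : V) : (a + b + S = a + S + b)%R.
Proof. ring. Qed.

Lemma quilt_per d (g : vec d -> int) : quilt_affine g -> exists p, 0 < p /\
  forall y z : vec d, (forall i, y i %% p = z i %% p) ->
    forall l, (g (upd d y l) - g y = g (upd d z l) - g z)%R.
Proof.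
move=> [_ [p [nabla [B [hp [_ hform]]]]]]; exists p; split => // y z hyz l.
apply: (@intr_inj rat); rewrite !intrB !hform.
have sumE : forall t : vec d, (\sum_(i < d) nabla i * ((upd d t l) i)%:R =
     \sum_(i < d) nabla i * (t i)%:R + nabla l)%R.
  move=> t; rewrite (bigD1 l) //= [X in _ = (X + _)%R](bigD1 l) //= /upd eqxx.
  rewrite (eq_bigr (fun i => nabla i * (t i)%:R)%R); last by move=> i /negbTE ->.
  by rewrite -[(t l).+1]addn1 natrD mulrDr mulr1 aux2.
have B1 : (fun i => upd d y l i %% p) = (fun i => upd d z l i %% p).
  apply: functional_extensionality => i; rewrite /upd; case: (i == l) => //.
  by apply/eqP; rewrite -[(y i).+1]addn1 -[(z i).+1]addn1 eqn_modDr; apply/eqP; exact: hyz.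
have B0 : (fun i => y i %% p) = (fun i => z i %% p).
  by apply: functional_extensionality => i; rewrite hyz.
by rewrite !sumE B1 B0 !aux.
Qed.

Theorem lemma15 (d : nat) (f : vec d -> nat) :
  nondecreasing_nat f ->
  (exists (m : nat) (g : 'I_m.+1 -> vec d -> int) (n : vec d),
      (forall k, quilt_affine (g k)) /\
      forall x, vle n x ->
        (forall k, (Posz (f x) <= g k x)%R) /\ exists k, Posz (f x) = g k x) ->
  (forall (i : 'I_d) (j : nat), obliviously_computable (fix_input f i j)) ->
  obliviously_computable f.
Proof.
move=> Hf [m [g [n [Hq Hmin]]]] H3.
pose M := \max_(i < d) n i.
have HnM : forall i, n i <= M by move=> i; apply: leq_bigmax.
pose pk := fun k => proj1_sig (constructive_indefinite_description _ (quilt_per _ _ (Hq k))).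
have hpk := fun k => proj2_sig (constructive_indefinite_description _ (quilt_per _ _ (Hq k))).
pose P := (\max_(k < m.+1) pk k)`!.
have P_gt0 : 0 < P by apply: fact_gt0.
have hdiv : forall k, pk k %| P.
  by move=> k; apply: dvdn_fact; rewrite (hpk k).1 /=; apply: leq_bigmax.
have Hg_per : forall k (y z : vec d), (forall i, y i %% P = z i %% P) ->
    forall l, (g k (upd d y l) - g k y = g k (upd d z l) - g k z)%R.
  move=> k y z hyz; apply: (hpk k).2 => i.
  by rewrite -(modn_dvdm (y i) (hdiv k)) -(modn_dvdm (z i) (hdiv k)) hyz.
have Hg_mono : forall k x y, vle x y -> (g k x <= g k y)%R by move=> k; case: (Hq k).
have Hg_nonneg : forall k t, (0 <= g k (maxv d M t))%R.
  move=> k t; have hv : vle n (maxv d M t) by move=> i; rewrite /maxv; have := HnM i; lia.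
  have [h _] := Hmin _ hv; have := h k; lia.
pose Cf := fun ij : IJ d M => proj1_sig (constructive_indefinite_description _ (H3 ij.1 ij.2)).
have HC : forall ij : IJ d M, output_oblivious (Cf ij) /\ stably_computes (Cf ij) (fix_input f ij.1 ij.2).
  by move=> ij; exact: (proj2_sig (constructive_indefinite_description _ (H3 ij.1 ij.2))).
exists (Comp d m g M P Cf P_gt0); split; first exact: Comp_oblivious.
exact: (Comp_computes d f m g M P Cf P_gt0 Hg_mono Hg_per Hg_nonneg HC n Hf HnM Hmin).
Qed.
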